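(* Let $(X,+,d)$ be a complete, locally compact Abelian metric group with translation-invariant metric $d$. Let $A\in K(X)$. If $S(A)=\{0\}$, then the spectre operator $S:K(X)\to K(X)$ is continuous at $A$ with respect to the Pompeiu–Hausdorff metric.
   Context: $d$ satisfies $d(x,y)=d(x+z,y+z)$ for all $x,y,z\in X$; $0$ is the neutral element. $K(X)$ is the family of non-empty compact subsets of $X$ with the Pompeiu–Hausdorff metric $d_H(A,B)=\max\{\sup_{a\in A}d(a,B),\sup_{b\in B}d(A,b)\}$. The spectre of $A\subset X$ is $S(A):=\{z\in X:\ \forall_{a\in A}\ (a+z\in A \text{ or } a-z\in A)\}$; it is compact for compact non-empty $A$. *)

(* Defs.v *)
From Stdlib Require Import Reals.
From Coquelicot Require Import Coquelicot.
Open Scope R_scope.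
Set Implicit Arguments.
Unset Strict Implicit.

Section MetricGroup.
Variables (X : Type) (add : X -> X -> X) (opp : X -> X) (zero : X)
          (d : X -> X -> R).

Definition abelian_group : Prop :=
  (forall x y z, add x (add y z) = add (add x y) z) /\
  (forall x y, add x y = add y x) /\
  (forall x, add x zero = x) /\
  (forall x, add x (opp x) = zero).

Definition is_metric : Prop :=
  (forall x y, 0 <= d x y) /\
  (forall x y, d x y = 0 <-> x = y) /\
  (forall x y, d x y = d y x) /\
  (forall x y z, d x z <= d x y + d y z).

Definition translation_invariant : Prop :=
  forall x y z, d x y = d (add x z) (add y z).

Definition open_set (U : X -> Prop) : Prop :=
  forall x, U x -> exists r, 0 < r /\ forall y, d x y < r -> U y.

Definition compact (A : X -> Prop) : Prop :=
  forall (I : Type) (U : I -> X -> Prop),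
    (forall i, open_set (U i)) ->
    (forall x, A x -> exists i, U i x) ->
    exists l : list I, forall x, A x -> exists i, List.In i l /\ U i x.

Definition cauchy_seq (u : nat -> X) : Prop :=
  forall eps, 0 < eps -> exists N, forall m n, (N <= m)%nat -> (N <= n)%nat ->
    d (u m) (u n) < eps.

Definition seq_converges (u : nat -> X) (l : X) : Prop :=
  forall eps, 0 < eps -> exists N, forall n, (N <= n)%nat -> d (u n) l < eps.

Definition complete : Prop :=
  forall u, cauchy_seq u -> exists l, seq_converges u l.

Definition locally_compact : Prop :=
  forall x, exists (K : X -> Prop) r, compact K /\ 0 < r /\
    forall y, d x y < r -> K y.

Definition complete_lc_abelian_metric_group : Prop :=
  abelian_group /\ is_metric /\ translation_invariant /\ complete /\
  locally_compact.

Definition in_KX (A : X -> Prop) : Prop := (exists a, A a) /\ compact A.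

Definition dist_pt_set (x : X) (B : X -> Prop) : R :=
  real (Glb_Rbar (fun r => exists b, B b /\ r = d x b)).

Definition excess (A B : X -> Prop) : R :=
  real (Lub_Rbar (fun r => exists a, A a /\ r = dist_pt_set a B)).

Definition hausdorff (A B : X -> Prop) : R := Rmax (excess A B) (excess B A).

Definition spectre (A : X -> Prop) : X -> Prop :=
  fun z => forall a, A a -> A (add a z) \/ A (add a (opp z)).

End MetricGroup.

(* Main.v *)
Require Import Defs.
From Stdlib Require Import Reals Lra Lia List Classical.
From Coquelicot Require Import Coquelicot.
Open Scope R_scope.

Lemma lub_lt (E : R -> Prop) M c y :
  (forall x, E x -> x <= M) -> real (Lub_Rbar E) < c -> E y -> y < c.
Proof.
  intros HM Hc Hy. destruct (Lub_Rbar_correct E) as [Hub Hl].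
  assert (H1 := Hub y Hy). assert (H2 : Rbar_le (Lub_Rbar E) M).
  { apply Hl. intros x Hx. simpl. apply HM; auto. }
  destruct (Lub_Rbar E); simpl in *; try contradiction; lra.
Qed.

Lemma lub_le (E : R -> Prop) M :
  0 <= M -> (forall x, E x -> x <= M) -> real (Lub_Rbar E) <= M.
Proof.
  intros H0 HM. destruct (Lub_Rbar_correct E) as [Hub Hl].
  assert (H2 : Rbar_le (Lub_Rbar E) M).
  { apply Hl. intros x Hx. simpl. apply HM; auto. }
  destruct (Lub_Rbar E); simpl in *; try contradiction; lra.
Qed.

Lemma glb_le (E : R -> Prop) y :
  (forall x, E x -> 0 <= x) -> E y -> real (Glb_Rbar E) <= y.
Proof.
  intros H0 Hy. destruct (Glb_Rbar_correct E) as [Hlb Hl].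
  assert (H1 := Hlb y Hy). assert (H2 : Rbar_le 0 (Glb_Rbar E)).
  { apply Hl. intros x Hx. simpl. apply H0; auto. }
  destruct (Glb_Rbar E); simpl in *; try contradiction; lra.
Qed.

Lemma glb_lt (E : R -> Prop) y c :
  (forall x, E x -> 0 <= x) -> E y -> real (Glb_Rbar E) < c ->
  exists z, E z /\ z < c.
Proof.
  intros H0 Hy Hc. destruct (Glb_Rbar_correct E) as [Hlb Hl].
  destruct (Classical_Prop.classic (exists z, E z /\ z < c)) as [?|Hn]; auto.
  exfalso.
  assert (H1 := Hlb y Hy). assert (H2 : Rbar_le c (Glb_Rbar E)).
  { apply Hl. intros x Hx. simpl. destruct (Rlt_le_dec x c); auto.
    exfalso; apply Hn; eauto. }
  destruct (Glb_Rbar E); simpl in *; try contradiction; lra.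
Qed.

Lemma small_inv r : 0 < r -> exists N, forall n, (N <= n)%nat -> / INR (S n) < r.
Proof.
  intros Hr. destruct (INR_unbounded (/ r)) as [N HN]. exists N. intros n Hn.
  apply le_INR in Hn. rewrite S_INR.
  assert (0 < / r) by (apply Rinv_0_lt_compat; lra).
  replace r with (/ / r) by (field; lra).
  apply Rinv_lt_contravar; nra.
Qed.

Lemma list_max {I} (f : I -> nat) (l : list I) : exists M, forall i, In i l -> (f i <= M)%nat.
Proof.
  induction l as [|a l [M HM]]. exists 0%nat; simpl; tauto.
  exists (Nat.max (f a) M). intros i [->|Hi]. apply Nat.le_max_l.
  eapply Nat.le_trans. apply HM; auto. apply Nat.le_max_r.
Qed.

Lemma ball_open X (d : X -> X -> R) (Hm : is_metric d) c r :
  Defs.open_set d (fun y => d c y < r).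
Proof.
  destruct Hm as (H0 & H1 & H2 & H3).
  intros x Hx. exists (r - d c x). split. lra. intros y Hy.
  specialize (H3 c x y). lra.
Qed.

Lemma cpt_bounded X (d : X -> X -> R) (Hm : is_metric d) A (HA : Defs.compact d A) a0 :
  exists M, forall a, A a -> d a0 a <= M.
Proof.
  destruct (HA nat (fun n y => d a0 y < INR n)) as [l Hl].
  - intros n. apply ball_open; auto.
  - intros x _. destruct (INR_unbounded (d a0 x)) as [n Hn]. exists n. lra.
  - destruct (list_max (fun n => n) l) as [M HM]. exists (INR M).
    intros a Ha. destruct (Hl a Ha) as [i [Hi Hd]].
    apply HM in Hi. apply le_INR in Hi. lra.
Qed.

Lemma cpt_closed X (d : X -> X -> R) (Hm : is_metric d) A (HA : Defs.compact d A) x :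
  ~ A x -> exists r, 0 < r /\ forall a, A a -> r <= d x a.
Proof.
  intros Hx. assert (Hm' := Hm). destruct Hm' as (H0 & H1 & H2 & H3).
  destruct (HA nat (fun n y => / INR (S n) < d x y)) as [l Hl].
  - intros n y Hy. exists (d x y - / INR (S n)). split. lra. intros z Hz.
    specialize (H3 x z y). rewrite (H2 z y) in H3. lra.
  - intros a Ha. assert (Hp : 0 < d x a).
    { destruct (Rle_lt_or_eq_dec 0 (d x a) (H0 x a)) as [?|He]; auto.
      symmetry in He. apply H1 in He. subst. contradiction. }
    destruct (small_inv _ Hp) as [N HN]. exists N. apply HN. lia.
  - destruct (list_max (fun n => n) l) as [M HM]. exists (/ INR (S M)). split.
    apply Rinv_0_lt_compat. apply lt_0_INR. lia.
    intros a Ha. destruct (Hl a Ha) as [i [Hi Hd]].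
    apply HM in Hi. left. eapply Rle_lt_trans; [|exact Hd].
    apply Rinv_le_contravar. apply lt_0_INR; lia. apply le_INR. lia.
Qed.

Lemma cluster X (d : X -> X -> R) (Hm : is_metric d) A (HA : Defs.compact d A)
  (Rn : nat -> X -> Prop) :
  (forall n x, Rn n x -> A x) -> (forall n, exists x, Rn n x) ->
  exists c, A c /\ forall r, 0 < r -> forall N, exists n, (N <= n)%nat /\
     exists x, Rn n x /\ d x c < r.
Proof.
  intros HRA HRn. assert (Hm' := Hm). destruct Hm' as (H0 & H1 & H2 & H3).
  apply NNPP; intros Hn.
  destruct (HA (X * R * nat)%type (fun i y => let '(c, r, N) := i in
     A c /\ 0 < r /\ (forall n, (N <= n)%nat -> forall x, Rn n x -> r <= d x c)
     /\ d c y < r)) as [l Hl].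
  - intros [[c r] N] y (Hc & Hr & HN & Hy). exists (r - d c y). split. lra.
    intros z Hz. repeat split; auto. specialize (H3 c y z). lra.
  - intros c Hc. apply NNPP; intros Hno. apply Hn. exists c. split; auto.
    intros r Hr N. apply NNPP; intros Hno2. apply Hno. exists (c, r, N).
    repeat split; auto.
    + intros n Hnn x Hx. destruct (Rlt_le_dec (d x c) r) as [Hlt|]; auto.
      exfalso. apply Hno2. exists n. split; auto. exists x. auto.
    + rewrite (proj2 (H1 c c) eq_refl). auto.
  - destruct (list_max (fun i : X * R * nat => snd i) l) as [M HM].
    destruct (HRn M) as [x Hx]. destruct (Hl x (HRA _ _ Hx)) as [[[c r] N] [Hi Hd]].
    apply HM in Hi. simpl in Hi. destruct Hd as (Hc & Hr & HN & Hy).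
    specialize (HN M Hi x Hx). rewrite H2 in HN. lra.
Qed.

Lemma excess_lt X (d : X -> X -> R) (Hm : is_metric d) A B a0 b0 delta :
  Defs.compact d A -> A a0 -> B b0 -> excess d A B < delta ->
  forall a, A a -> exists b, B b /\ d a b < delta.
Proof.
  intros HA Ha0 Hb0 He a Ha. assert (Hm' := Hm). destruct Hm' as (H0 & H1 & H2 & H3).
  destruct (cpt_bounded _ _ Hm A HA a0) as [M HM].
  assert (Hnn : forall a x, (exists b, B b /\ x = d a b) -> 0 <= x).
  { intros a' x [b [_ ->]]. apply H0. }
  assert (Hd : dist_pt_set d a B < delta).
  { unfold excess in He. apply (lub_lt _ (M + d a0 b0) _ (dist_pt_set d a B)) in He; [exact He| |exists a; split; auto].
    intros x [a' [Ha' ->]]. unfold dist_pt_set.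
    eapply Rle_trans. apply glb_le. apply Hnn. exists b0; split; [exact Hb0|reflexivity].
    specialize (H3 a' a0 b0). specialize (HM a' Ha'). rewrite H2 in HM. lra. }
  unfold dist_pt_set in Hd. destruct (glb_lt _ _ _ (Hnn a) (ex_intro _ b0 (conj Hb0 eq_refl)) Hd)
    as [z [[b [Hb ->]] Hz]]. eauto.
Qed.

Lemma haus_lt X (d : X -> X -> R) (Hm : is_metric d) A B delta :
  in_KX d A -> in_KX d B -> hausdorff d A B < delta ->
  (forall a, A a -> exists b, B b /\ d a b < delta) /\
  (forall b, B b -> exists a, A a /\ d b a < delta).
Proof.
  intros [[a0 Ha0] HA] [[b0 Hb0] HB] H. unfold hausdorff in H.
  apply Rmax_Rlt in H. destruct H. split; eapply (excess_lt _ _ Hm); eauto.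
Qed.

Lemma grp_facts X (add : X -> X -> X) opp zero :
  abelian_group add opp zero ->
  (forall x, add zero x = x) /\ (forall x, opp (opp x) = x) /\ opp zero = zero /\
  (forall x y, add (opp x) (add x y) = y).
Proof.
  intros (HA & HC & H0 & HN).
  assert (L0 : forall x, add zero x = x) by (intros; rewrite HC; auto).
  assert (L1 : forall x y, add (opp x) (add x y) = y).
  { intros x y. rewrite HA, (HC (opp x) x), HN. auto. }
  split; auto. split.
  - intros x. transitivity (add (opp (opp x)) (add (opp x) x)).
    rewrite (HC (opp x) x), HN, H0; auto. apply L1.
  - split; auto. rewrite <- (L0 (opp zero)). auto.
Qed.

Lemma dist_facts X (add : X -> X -> X) opp zero d :
  abelian_group add opp zero -> is_metric d -> translation_invariant add d ->
  (forall z x y, d (add z x) (add z y) = d x y) /\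
  (forall a a' z z', d (add a z) (add a' z') <= d a a' + d z z') /\
  (forall x y, d (opp x) (opp y) = d x y) /\
  (forall b z, d (add b z) b = d z zero).
Proof.
  intros HG Hm HT. destruct (grp_facts _ _ _ _ HG) as (L0 & L1 & L2 & L3).
  destruct HG as (HA & HC & H0 & HN). destruct Hm as (D0 & D1 & D2 & D3).
  assert (T : forall z x y, d (add z x) (add z y) = d x y).
  { intros. rewrite (HT x y z), (HC x z), (HC y z). auto. }
  split; auto. split.
  - intros. eapply Rle_trans. apply (D3 _ (add a' z)). rewrite <- HT, T. lra.
  - split.
    + intros x y. rewrite (HT (opp x) (opp y) (add x y)).
      rewrite L3, (HC x y), L3. apply D2.
    + intros b z. rewrite <- (L0 b) at 2. rewrite (HC b z), <- HT. auto.
Qed.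

Lemma good_B X (add : X -> X -> X) opp zero d A B eps :
  is_metric d -> (forall x, add x zero = x) ->
  (forall z, spectre add opp A z <-> z = zero) -> 0 < eps ->
  (forall z, spectre add opp B z -> d z zero <= eps / 2) ->
  hausdorff d (spectre add opp A) (spectre add opp B) < eps.
Proof.
  intros (D0 & D1 & D2 & D3) H0 HS Heps Hz.
  assert (Hzz : d zero zero = 0) by (apply D1; auto).
  assert (ZB : spectre add opp B zero) by (intros b Hb; left; rewrite H0; auto).
  assert (Hnn : forall a S x, (exists b, S b /\ x = d a b) -> 0 <= x).
  { intros a' S x [b [_ ->]]. apply D0. }
  unfold hausdorff. apply Rle_lt_trans with (eps / 2); [|lra].
  apply Rmax_lub; apply lub_le; try lra; intros x [a [Ha ->]]; unfold dist_pt_set.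
  - apply HS in Ha. subst. eapply Rle_trans. apply glb_le. apply Hnn.
    exists zero; split; [exact ZB|reflexivity]. lra.
  - eapply Rle_trans. apply glb_le. apply Hnn.
    exists zero; split; [apply HS; reflexivity|reflexivity]. auto.
Qed.

Theorem corollary3p9 (X : Type) (add : X -> X -> X) (opp : X -> X) (zero : X)
  (d : X -> X -> R)
  (HX : complete_lc_abelian_metric_group add opp zero d)
  (A : X -> Prop) (HA : in_KX d A)
  (HS : forall z, spectre add opp A z <-> z = zero) :
  forall eps, 0 < eps -> exists delta, 0 < delta /\
    forall B, in_KX d B -> hausdorff d A B < delta ->
      hausdorff d (spectre add opp A) (spectre add opp B) < eps.
Proof.
  intros eps Heps.
  destruct HX as (HG & Hm & HT & _ & _).
  destruct (grp_facts _ _ _ _ HG) as (L0 & L1 & L2 & L3).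
  destruct (dist_facts _ _ _ _ _ HG Hm HT) as (T & Dadd & Dopp & Dz).
  assert (HG' := HG). destruct HG' as (GA & GC & G0 & GN).
  assert (Hm' := Hm). destruct Hm' as (D0 & D1 & D2 & D3).
  assert (HA' := HA). destruct HA' as [[a0 Ha0] HAc].
  set (Pn := fun (n : nat) u => eps / 2 < d u zero /\
     forall a, A a -> exists a', A a' /\
       (d (add a u) a' < 2 * / INR (S n) \/ d (add a (opp u)) a' < 2 * / INR (S n))).
  apply NNPP; intro Hno.
  assert (Hseq : forall n, exists c, A c /\ exists u, Pn n u /\ d (add a0 u) c < 2 * / INR (S n)).
  { intro n. set (dl := / INR (S n)).
    assert (Hdl : 0 < dl) by (apply Rinv_0_lt_compat, lt_0_INR; lia).
    apply NNPP; intro Hnu. apply Hno. exists dl. split; auto. intros B HB Hh.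
    apply (good_B _ add opp zero d A B eps); auto. intros z Hz. apply Rnot_lt_le; intro Hbig. apply Hnu.
    destruct (haus_lt _ _ Hm _ _ _ HA HB Hh) as [HAB HBA].
    assert (approx : forall a, A a -> exists a', A a' /\
       (d (add a z) a' < 2 * dl \/ d (add a (opp z)) a' < 2 * dl)).
    { intros a Ha. destruct (HAB a Ha) as [b [Hb Hdb]].
      destruct (Hz b Hb) as [Hb1|Hb1]; destruct (HBA _ Hb1) as [a' [Ha' Hd']];
        exists a'; split; auto; [left|right].
      - specialize (D3 (add a z) (add b z) a'). rewrite <- HT in D3. lra.
      - specialize (D3 (add a (opp z)) (add b (opp z)) a'). rewrite <- HT in D3. lra. }
    destruct (HAB a0 Ha0) as [b0 [Hb0 Hd0]].
    destruct (Hz b0 Hb0) as [Hb1|Hb1]; destruct (HBA _ Hb1) as [c [Hc Hdc]];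
      exists c; split; auto.
    - exists z. split. split; [lra|exact approx].
      specialize (D3 (add a0 z) (add b0 z) c). rewrite <- HT in D3. fold dl. lra.
    - exists (opp z). split. split.
      + rewrite <- L2, Dopp. lra.
      + intros a Ha. destruct (approx a Ha) as [a' [Ha' H]]. exists a'. split; auto.
        rewrite L1. tauto.
      + specialize (D3 (add a0 (opp z)) (add b0 (opp z)) c). rewrite <- HT in D3. fold dl. lra. }
  destruct (cluster _ _ Hm A HAc (fun n c => A c /\ exists u, Pn n u /\ d (add a0 u) c < 2 * / INR (S n)))
    as [c [Hc Hcl]]; [tauto|exact Hseq|].
  set (w := add (opp a0) c).
  assert (K : forall r, 0 < r -> exists n u, / INR (S n) < r /\ Pn n u /\ d u w < 3 * r).
  { intros r Hr. destruct (small_inv r Hr) as [N HN].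
    destruct (Hcl r Hr N) as [n [Hn [x [[Hx [u [Pu Hu]]] Hxc]]]].
    exists n, u. specialize (HN n Hn). split; auto. split; auto.
    rewrite <- (T a0). unfold w.
    replace (add a0 (add (opp a0) c)) with c.
    2:{ rewrite <- (L1 a0) at 1. rewrite L3. auto. }
    specialize (D3 (add a0 u) x c). lra. }
  assert (Hw : spectre add opp A w).
  { intros a Ha. apply NNPP; intro Hn. apply not_or_and in Hn. destruct Hn as [Hn1 Hn2].
    destruct (cpt_closed _ _ Hm A HAc _ Hn1) as [r1 [Hr1 H1]].
    destruct (cpt_closed _ _ Hm A HAc _ Hn2) as [r2 [Hr2 H2]].
    set (r := Rmin r1 r2 / 5).
    assert (Hr : 0 < r) by (unfold r; apply Rmin_case; lra).
    assert (Hr1' : 5 * r <= r1) by (unfold r; generalize (Rmin_l r1 r2); lra).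
    assert (Hr2' : 5 * r <= r2) by (unfold r; generalize (Rmin_r r1 r2); lra).
    destruct (K r Hr) as [n [u [Hn [[_ Pu] Hu]]]].
    destruct (Pu a Ha) as [a' [Ha' [Hd|Hd]]].
    - specialize (H1 a' Ha'). specialize (D3 (add a w) (add a u) a'). rewrite T in D3.
      rewrite D2 in Hu. lra.
    - specialize (H2 a' Ha'). specialize (D3 (add a (opp w)) (add a (opp u)) a').
      rewrite T, Dopp in D3. rewrite D2 in Hu. lra. }
  apply HS in Hw. rewrite Hw in K.
  destruct (K (eps / 6)) as [n [u [_ [[Pu _] Hu]]]]; lra.
Qed.
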